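(* Let $r\ge0$ and $\delta\ge0$, and let $\overline{D}_\delta=\{z\in\mathbb{C}:|z|\le\delta\}$. Then $f_{c_2}\circ f_{c_1}(\overline{D}_\delta)\subset\overline{D}_\delta$ for every $c_1,c_2\in\overline{B}(-1,r)=\{c'\in\mathbb{C}:|c'+1|\le r\}$ if and only if $\delta^4+2(1+r)\delta^2+r^2+3r\le\delta$.
   Context: $f_c(z)=z^2+c$ for $c\in\mathbb{C}$. *)

(* Defs.v *)
From Stdlib Require Import Reals.
From Coquelicot Require Import Coquelicot.

Definition fc (c z : C) : C := (z * z + c)%C.

Definition cdisk (a : C) (rho : R) (z : C) : Prop := (Cmod (z - a) <= rho)%R.

(* Main.v *)
Require Import Defs.
From Stdlib Require Import Reals Lra.
From Coquelicot Require Import Coquelicot.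

Lemma Cmod_pair (x : R) : Cmod (x, 0%R) = Rabs x.
Proof. exact (Cmod_R x). Qed.

Theorem lemma4p16 (r delta : R) (hr : (0 <= r)%R) (hd : (0 <= delta)%R) :
  (forall c1 c2 : C, cdisk (-1)%C r c1 -> cdisk (-1)%C r c2 ->
     forall z : C, cdisk 0%C delta z -> cdisk 0%C delta (fc c2 (fc c1 z)))
  <->
  (delta ^ 4 + 2 * (1 + r) * delta ^ 2 + r ^ 2 + 3 * r <= delta)%R.
Proof.
  unfold cdisk, fc. split.
  - intros H.
    set (E := (delta ^ 4 + 2 * (1 + r) * delta ^ 2 + r ^ 2 + 3 * r)%R).
    assert (H1 : Cmod (((-1 - r)%R, 0%R) - (-1))%C <= r).
    { replace (((-1 - r)%R, 0%R) - (-1))%C with (RtoC (- r)).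
      rewrite Cmod_R, Rabs_left1; lra.
      unfold RtoC, Cminus, Cplus, Copp; simpl; f_equal; ring. }
    assert (H2 : Cmod (((-1 + r)%R, 0%R) - (-1))%C <= r).
    { replace (((-1 + r)%R, 0%R) - (-1))%C with (RtoC r).
      rewrite Cmod_R, Rabs_right; lra.
      unfold RtoC, Cminus, Cplus, Copp; simpl; f_equal; ring. }
    assert (H3 : Cmod ((0%R, delta) - 0)%C <= delta).
    { replace (((0%R, delta) - 0)%C) with (Ci * RtoC delta)%C.
      rewrite Cmod_mult, Cmod_R, Rabs_right. 2: lra.
      replace (Cmod Ci) with 1%R. lra.
      unfold Cmod, Ci; simpl. rewrite <- sqrt_1 at 1. f_equal. ring.
      unfold RtoC, Ci, Cminus, Cplus, Copp, Cmult; simpl; f_equal; ring. }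
    specialize (H _ _ H1 H2 _ H3).
    replace (((0%R, delta) * (0%R, delta) + ((-1 - r)%R, 0%R)) *
             ((0%R, delta) * (0%R, delta) + ((-1 - r)%R, 0%R)) +
             ((-1 + r)%R, 0%R) - 0)%C with (RtoC E) in H.
    + rewrite Cmod_R, Rabs_right in H. lra.
      unfold E. apply Rle_ge.
      assert (0 <= delta ^ 4) by (apply pow_le; lra).
      assert (0 <= delta ^ 2) by (apply pow_le; lra).
      nra.
    + unfold E, RtoC, Cminus, Cplus, Copp, Cmult; simpl; f_equal; ring.
  - intros H c1 c2 Hc1 Hc2 z Hz.
    set (a1 := (c1 - (-1))%C) in *.
    set (a2 := (c2 - (-1))%C) in *.
    assert (Hz' : Cmod z <= delta).
    { replace z with (z - 0)%C by ring. exact Hz. }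
    set (w := (z * z)%C).
    assert (Hw : Cmod w <= delta ^ 2).
    { unfold w. rewrite Cmod_mult. assert (0 <= Cmod z) by apply Cmod_ge_0. nra. }
    assert (Hw0 : 0 <= Cmod w) by apply Cmod_ge_0.
    assert (Ha0 : 0 <= Cmod a1) by apply Cmod_ge_0.
    replace ((w + c1) * (w + c1) + c2 - 0)%C with
      (w * w + (w * a1 + w * a1) + a1 * a1 + (- w + - w) + (- a1 + - a1) + a2)%C.
    2: { unfold w, a1, a2. ring. }
    eapply Rle_trans. apply Cmod_triangle.
    eapply Rle_trans. apply Rplus_le_compat_r. apply Cmod_triangle.
    eapply Rle_trans. apply Rplus_le_compat_r. apply Rplus_le_compat_r. apply Cmod_triangle.
    eapply Rle_trans. apply Rplus_le_compat_r. apply Rplus_le_compat_r. apply Rplus_le_compat_r. apply Cmod_triangle.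
    eapply Rle_trans. apply Rplus_le_compat_r. apply Rplus_le_compat_r. apply Rplus_le_compat_r. apply Rplus_le_compat_r. apply Cmod_triangle.
    rewrite !Cmod_mult.
    pose proof (Cmod_triangle (w*a1) (w*a1)) as T1.
    pose proof (Cmod_triangle (-w) (-w)) as T2.
    pose proof (Cmod_triangle (-a1) (-a1)) as T3.
    rewrite !Cmod_mult in T1. rewrite !Cmod_opp in T2, T3.
    assert (Cmod w * Cmod w <= delta^2 * delta^2) by nra.
    assert (Cmod w * Cmod a1 <= delta^2 * r) by nra.
    assert (Cmod a1 * Cmod a1 <= r * r) by nra.
    replace (delta ^ 4) with (delta^2 * delta^2)%R in H by ring.
    nra.
Qed.
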